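(* Let $b\ge a>0$ and $m\in\mathbb{R}$, and let $f$ be a function on $(0,\infty)$ which is nonnegative and increasing on $(0,b)$ and satisfies $f(x)\ge m$ for $x\ge b$. Then for every $\xi>0$, \[f(a)\le\frac{e^{a\xi}\,\xi\,\mathcal{L}f(\xi)-m\,e^{-(b-a)\xi}}{1-e^{-(b-a)\xi}}.\]
   Context: $\mathcal{L}f(\xi)=\int_0^\infty e^{-\xi x}f(x)\,dx$ denotes the Laplace transform (assumed finite). *)

(* Defs.v *)
From HB Require Import structures.
From mathcomp Require Import all_boot all_order all_algebra.
From mathcomp Require Import all_classical all_reals all_analysis.
Set Implicit Arguments. Unset Strict Implicit. Unset Printing Implicit Defensive.
Import Order.TTheory GRing.Theory Num.Theory.
Local Open Scope classical_set_scope.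
Local Open Scope ring_scope.

Definition laplace_integrand {R : realType} (f : R -> R) (xi : R) : R -> R :=
  fun x => expR (- (xi * x)) * f x.

Definition laplace {R : realType} (f : R -> R) (xi : R) : R :=
  Rintegral (@lebesgue_measure R) `]0%R, +oo[ (laplace_integrand f xi).

Definition laplace_finite {R : realType} (f : R -> R) (xi : R) : Prop :=
  (@lebesgue_measure R).-integrable `]0%R, +oo[
    (fun x => (laplace_integrand f xi x)%:E).

(* Main.v *)
Require Import Defs.
From HB Require Import structures.
From mathcomp Require Import all_boot all_order all_algebra.
From mathcomp Require Import all_classical all_reals all_analysis.
From mathcomp Require Import measurable_realfun.
From mathcomp.algebra_tactics Require Import ring lra.
Import Order.TTheory GRing.Theory Num.Theory.
Import numFieldTopology.Exports numFieldNormedType.Exports.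
Local Open Scope ring_scope.

Section Aux.
Local Open Scope classical_set_scope.
Definition EE {R : realType} (xi x : R) := expR (- (xi * x)).
Definition FF {R : realType} (xi x : R) := - EE xi x / xi.

Lemma cE {R : realType} (xi : R) : continuous (EE xi).
Proof.
move=> x; apply: continuous_comp; last exact: continuous_expR.
by apply: (@continuousN _ R^o); apply: continuousM => //; exact: cst_continuous.
Qed.

Lemma mE {R : realType} (xi : R) (D : set R) : measurable D -> measurable_fun D (EE xi).
Proof.
move=> mD; apply: measurable_funS (subsetT _) _ => //.
exact: continuous_measurable_fun (cE xi).
Qed.

Lemma dF {R : realType} (xi : R) (x : R) : 0 < xi -> is_derive x 1 (FF xi) (EE xi x).
Proof.
move=> xi0.
have h1 : is_derive x 1 (fun y : R => - (xi * y)) (- (xi * 1)).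
  apply: is_deriveN; apply: is_deriveZ; exact: is_derive_id.
have h2 := @is_derive1_comp _ expR (fun y : R => - (xi * y)) x _ _ (is_derive_expR (- (xi * x))) h1.
have h3 := @is_deriveZ _ _ _ (expR \o (fun y : R => - (xi * y))) (- xi^-1) x 1 _ h2.
have -> : FF xi = (- xi^-1) \*: (expR \o (fun y : R => - (xi * y))).
  apply/funext => y; rewrite /FF /EE /= -[_ *: _]/(_ * _) mulrC mulrN mulNr.
  done.
have e : (- xi^-1 *: (expR (- (xi * x)) * - (xi * 1))) = EE xi x.
  rewrite /EE /= -[_ *: _]/(_ * _); field; exact: lt0r_neq0.
rewrite e in h3. exact h3.
Qed.

Lemma EE_cvg {R : realType} (xi : R) : 0 < xi -> EE xi x @[x --> +oo] --> 0.
Proof.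
move=> xi0.
rewrite (_ : EE xi = (fun z => expR (- z)) \o (fun z => xi * z)); last first.
  by apply/funext => x.
apply: (@cvg_comp _ _ _ (fun z => xi * z) (fun z => expR (- z)) _ (pinfty_nbhs R)).
  exact: gt0_cvgMry.
exact: cvgr_expR.
Qed.

Lemma intE {R : realType} (xi c : R) : 0 < xi ->
  (\int[lebesgue_measure]_(x in `[c, +oo[) (EE xi x)%:E = (EE xi c / xi)%:E)%E.
Proof.
move=> xi0.
rewrite (@ge0_continuous_FTC2y _ (EE xi) (FF xi) c 0).
- by rewrite /FF -EFinB sub0r mulNr opprK.
- by move=> x _; exact: expR_ge0.
- exact/continuous_subspaceT/cE.
- rewrite (_ : 0 = - 0 / xi); last by rewrite oppr0 mul0r.
  apply: cvgMl; apply: cvgN; exact: EE_cvg.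
- by move=> x _; case: (dF xi x xi0).
- apply: cvg_at_right_filter; apply: differentiable_continuous.
  by apply/derivable1_diffP; case: (dF xi c xi0).
- by move=> x _; rewrite derive1E; apply: derive_val; exact: dF.
Qed.

Lemma intE_int {R : realType} (xi c : R) : 0 < xi ->
  (@lebesgue_measure R).-integrable `[c, +oo[ (EFin \o EE xi).
Proof.
move=> xi0; apply/integrableP; split.
  by apply/measurable_EFinP; exact: mE.
under eq_integral do rewrite /= ger0_norm ?expR_ge0//.
by rewrite intE// ltry.
Qed.

Lemma intEo_int {R : realType} (xi c : R) : 0 < xi ->
  (@lebesgue_measure R).-integrable `]c, +oo[ (EFin \o EE xi).
Proof.
move=> xi0; apply: (integrableS _ _ _ (intE_int xi c xi0)) => //.
by apply: subset_itvr; rewrite bnd_simp.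
Qed.

Lemma RintE {R : realType} (xi c : R) : 0 < xi ->
  \int[lebesgue_measure]_(x in `]c, +oo[) (EE xi x) = EE xi c / xi.
Proof.
move=> xi0; rewrite Rintegral_itv_obnd_cbnd; last exact: intEo_int.
by rewrite /Rintegral intE.
Qed.

End Aux.

Theorem proposition2p13 (R : realType) (a b m : R) (f : R -> R) :
  0 < a -> a < b ->
  (forall x, 0 < x < b -> 0 <= f x) ->
  (forall x y, 0 < x -> x <= y -> y < b -> f x <= f y) ->
  (forall x, b <= x -> m <= f x) ->
  forall xi : R, 0 < xi -> laplace_finite f xi ->
  f a <= (expR (a * xi) * xi * laplace f xi - m * expR (- ((b - a) * xi)))
         / (1 - expR (- ((b - a) * xi))).
Proof.
move=> a0 ab fpos fmon fm xi xi0 Lfin.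
set G := laplace_integrand f xi.
have GE : forall x, G x = EE xi x * f x by [].
have LE : laplace f xi = \int[lebesgue_measure]_(t in `]0, +oo[) G t by [].
have iG : (@lebesgue_measure R).-integrable `]0, +oo[%classic (EFin \o G) := Lfin.
clearbody G.
have iGS : forall D : set R, measurable D -> (D `<=` `]0, +oo[%classic)%classic ->
    (@lebesgue_measure R).-integrable D (EFin \o G).
  by move=> D mD DS; apply: (integrableS _ _ _ iG).
have s1 := @Rintegral_itvB _ G (BRight 0) (BInfty _ false) a iG.
rewrite /= !bnd_simp (ltW a0) in s1.
have {}s1 := s1 erefl erefl.
have iGa : (@lebesgue_measure R).-integrable `]a, +oo[%classic (EFin \o G).
  apply: iGS => //; apply: subset_itvr; rewrite bnd_simp; exact: ltW.
have s2 := @Rintegral_itvB _ G (BRight a) (BInfty _ false) b iGa.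
rewrite /= !bnd_simp (ltW ab) in s2.
have {}s2 := s2 erefl erefl.
rewrite -Rintegral_itv_bndo_bndc in s2; last first.
  apply: iGS => //; apply: subset_trans (subset_itvl _) (subset_itvr _); rewrite ?bnd_simp //; exact: ltW.
have A0 : 0 <= \int[lebesgue_measure]_(t in `]0, a]) G t.
  apply: Rintegral_ge0 => x; rewrite /= in_itv /= => /andP[x0 xa].
  rewrite GE mulr_ge0 ?expR_ge0 // fpos // x0 /=; exact: le_lt_trans ab.
have iEab : (@lebesgue_measure R).-integrable `]a, b[%classic (EFin \o EE xi).
  apply: (integrableS _ _ _ (intEo_int xi a xi0)) => //.
  by apply: subset_itvl; rewrite bnd_simp.
have iEb := intEo_int xi b xi0.
have iEa := intEo_int xi a xi0.
have Eab : \int[lebesgue_measure]_(x in `]a, b[) EE xi x = EE xi a / xi - EE xi b / xi.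
  have t := @Rintegral_itvB _ (EE xi) (BRight a) (BInfty _ false) b iEa.
  rewrite /= !bnd_simp (ltW ab) in t.
  have {}t := t erefl erefl.
  rewrite -Rintegral_itv_bndo_bndc // !RintE // in t.
  by rewrite -t; ring.
have A1 : f a * (EE xi a / xi - EE xi b / xi) <= \int[lebesgue_measure]_(x in `]a, b[) G x.
  rewrite -Eab -RintegralZl //.
  apply: le_Rintegral => //.
  - have -> : (EFin \o (fun x => f a * EE xi x)) = (fun x => (f a)%:E * (EFin \o EE xi) x)%E.
      by apply/funext => x; rewrite /= EFinM.
    exact: integrableZl.
  - apply: iGS => //; apply: subset_trans (subset_itvl _) (subset_itvr _); rewrite ?bnd_simp //; exact: ltW.
  - move=> x; rewrite /= in_itv /= => /andP[ax xb].
    rewrite GE mulrC ler_wpM2l ?expR_ge0 //; apply: fmon => //; exact: ltW.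
have A2 : m * (EE xi b / xi) <= \int[lebesgue_measure]_(x in `]b, +oo[) G x.
  rewrite -RintE // -RintegralZl //.
  apply: le_Rintegral => //.
  - have -> : (EFin \o (fun x => m * EE xi x)) = (fun x => m%:E * (EFin \o EE xi) x)%E.
      by apply/funext => x; rewrite /= EFinM.
    exact: integrableZl.
  - apply: iGS => //; apply: subset_itvr; rewrite bnd_simp; exact: (ltW (lt_trans a0 ab)).
  - move=> x; rewrite /= in_itv /= => /andP[bx _].
    rewrite GE mulrC ler_wpM2l ?expR_ge0 //; apply: fm; exact: ltW.
have key : f a * (EE xi a - EE xi b) + m * EE xi b <= xi * laplace f xi.
  have : f a * (EE xi a / xi - EE xi b / xi) + m * (EE xi b / xi) <= laplace f xi.
    have HL : laplace f xi = \int[lebesgue_measure]_(t in `]0, a]) G t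
       + \int[lebesgue_measure]_(x in `]a, b[) G x + \int[lebesgue_measure]_(x in `]b, +oo[) G x.
      rewrite -s2 -s1 LE; ring.
    rewrite HL -addrA -[X in X <= _]add0r; apply: lerD => //; exact: lerD.
  move=> H; have := ler_wpM2l (ltW xi0) H.
  have -> : xi * (f a * (EE xi a / xi - EE xi b / xi) + m * (EE xi b / xi))
     = f a * (EE xi a - EE xi b) + m * EE xi b.
    by field; exact: lt0r_neq0.
  by [].
have e1 : expR (a * xi) * EE xi a = 1.
  by rewrite /EE -expRD mulrC subrr expR0.
have e2 : expR (a * xi) * EE xi b = expR (- ((b - a) * xi)).
  by rewrite /EE -expRD; congr expR; ring.
have q1 : expR (- ((b - a) * xi)) < 1.
  rewrite -expR0 ltr_expR oppr_lt0; apply: mulr_gt0 => //; by rewrite subr_gt0.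
have ep : 0 < expR (a * xi) := expR_gt0 _.
have E3 : expR (a * xi) * (f a * (EE xi a - EE xi b) + m * EE xi b)
    = f a * (1 - expR (- ((b - a) * xi))) + m * expR (- ((b - a) * xi)).
  transitivity (f a * (expR (a * xi) * EE xi a - expR (a * xi) * EE xi b)
    + m * (expR (a * xi) * EE xi b)); first ring.
  by rewrite e1 e2.
have H := ler_wpM2l (ltW ep) key.
rewrite E3 in H.
rewrite ler_pdivlMr ?subr_gt0 //.
move: H; move: (expR (- ((b - a) * xi))) (expR (a * xi)) (laplace f xi) => q e L H.
rewrite -mulrA; lra.
Qed.
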